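(* For every integer $d\geq2$, $R_{2,d}(W_2\otimes W_d)=2d$.
   Context: Identify $S^d\mathbb{C}^2$ with binary forms of degree $d$ in a basis $\{x,y\}$; $W_d=x^{d-1}y$. The partially symmetric rank $R_{2,d}(T)$ of $T\in S^2\mathbb{C}^2\otimes S^d\mathbb{C}^2$ is the minimal $r$ with $T=\sum_{i=1}^r v_{i,1}^{\otimes 2}\otimes v_{i,2}^{\otimes d}$, $v_{i,j}\in\mathbb{C}^2$. *)

(* Defs.v *)
(* The complex numbers are modelled as R[i] = complex R for
   an arbitrary R : realType (a complete archimedean ordered field, i.e. R). *)
From HB Require Import structures.
From mathcomp Require Import all_boot all_order all_algebra.
From mathcomp Require Import reals complex.
Set Implicit Arguments. Unset Strict Implicit. Unset Printing Implicit Defensive.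
Import Order.TTheory GRing.Theory Num.Theory.
Local Open Scope ring_scope.

(* A tensor in (C^2)^{(x)2} (x) (C^2)^{(x)d}: its entries are indexed by
   a : 'I_2 -> 'I_2 (first two factors) and b : 'I_d -> 'I_2 (last d factors).
   S^2 C^2 (x) S^d C^2 is the subspace of tensors symmetric in each group. *)
Definition tensor2d (K : Type) (d : nat) := ('I_2 -> 'I_2) -> ('I_d -> 'I_2) -> K.

Definition psrank_one (K : nzRingType) (d : nat) (v w : 'I_2 -> K) : tensor2d K d :=
  fun a b => (\prod_(k < 2) v (a k)) * (\prod_(k < d) w (b k)).

Definition ps_decomp (K : nzRingType) (d r : nat) (T : tensor2d K d) : Prop :=
  exists (v w : 'I_r -> 'I_2 -> K),
    forall a b, T a b = \sum_(i < r) psrank_one (v i) (w i) a b.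

Definition psrank_eq (K : nzRingType) (d : nat) (T : tensor2d K d) (n : nat) : Prop :=
  ps_decomp n T /\ forall r, ps_decomp r T -> (n <= r)%N.

(* The symmetric tensor of the binary form W_m = x^{m-1} y, under the standard
   identification S^m C^2 = binary forms of degree m  (l^{(x)m} <-> (l.(x,y))^m). *)
Arguments psrank_one {K d}.
Definition W_sym (K : fieldType) (m : nat) (b : 'I_m -> 'I_2) : K :=
  if #|[pred k | val (b k) == 1%N]| == 1%N then (m%:R)^-1 else 0.

Definition W2_tensor_Wd (K : fieldType) (d : nat) : tensor2d K d :=
  fun a b => W_sym K a * W_sym K b.

(* Main.v *)
Require Import Defs.
From HB Require Import structures.
From mathcomp Require Import all_boot all_order all_algebra.
From mathcomp Require Import reals complex.
From mathcomp Require Import all_fingroup all_solvable all_field.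
From mathcomp Require Import zify ring lra.
Import Order.TTheory GRing.Theory Num.Theory.
Local Open Scope ring_scope.
Set Implicit Arguments. Unset Strict Implicit. Unset Printing Implicit Defensive.

Lemma prim_root_exists (F : numClosedFieldType) n : (n > 0)%N -> exists z : F, n.-primitive_root z.
Proof.
pose p : {poly F} := 'X^n - 1; have [r Dp] := closed_field_poly_normal p.
move=> n_gt0; rewrite (monicP _) ?monicXnsubC // scale1r in Dp.
have rn1: all n.-unity_root r by apply/allP=> z; rewrite -root_prod_XsubC -Dp.
have sz_r: (n < (size r).+1)%N.
  by rewrite -(size_prod_XsubC r id) -Dp size_XnsubC.
have [|z] := hasP (has_prim_root n_gt0 rn1 _ sz_r); last by exists z.
by rewrite -separable_prod_XsubC -Dp separable_Xn_sub_1 // pnatr_eq0 -lt0n.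
Qed.

Definition ev (K : comRingType) (k : nat) (c : nat -> K) (x y : K) : K :=
  \sum_(t < k.+1) c t * x ^+ (k - t) * y ^+ t.

Definition sol (K : comRingType) r (a b p q : 'I_r -> K) k (G H : nat -> K) :=
  forall i, a i * ev k G (p i) (q i) + b i * ev k H (p i) (q i) = 0.

Lemma key_id (K : comRingType) r (x a b p q : 'I_r -> K) d k n (G H : nat -> K) :
  (k + n <= d)%N ->
  \sum_i x i * p i ^+ (d - k - n) * q i ^+ n *
     (a i * ev k G (p i) (q i) + b i * ev k H (p i) (q i)) =
  \sum_(t < k.+1) (G t * \sum_i x i * a i * p i ^+ (d - (n + t)) * q i ^+ (n + t)
                 + H t * \sum_i x i * b i * p i ^+ (d - (n + t)) * q i ^+ (n + t)).
Proof.
move=> hkn.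
rewrite [RHS](eq_bigr (fun t : 'I_k.+1 => \sum_i (G t * (x i * a i * p i ^+ (d - (n + t)) * q i ^+ (n + t))
   + H t * (x i * b i * p i ^+ (d - (n + t)) * q i ^+ (n + t))))); last first.
  by move=> t _; rewrite big_split /= !mulr_sumr.
rewrite exchange_big /=; apply: eq_bigr => i _.
rewrite /ev !mulr_sumr mulrDr !mulr_sumr -big_split /=; apply: eq_bigr => t _.
have ht : (t <= k)%N by rewrite -ltnS.
have e1 : (d - (n + t) = (k - t) + (d - k - n))%N by lia.
rewrite e1 !exprD; ring.
Qed.

Lemma vanish (K : fieldType) r (a b p q : 'I_r -> K) d (c : K) (hc : c != 0)
  (Eaa : forall m, (m <= d)%N -> \sum_i a i * a i * p i ^+ (d - m) * q i ^+ m = 0)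
  (Eab : forall m, (m <= d)%N -> \sum_i a i * b i * p i ^+ (d - m) * q i ^+ m = if m == 1%N then c else 0)
  (Eba : forall m, (m <= d)%N -> \sum_i b i * a i * p i ^+ (d - m) * q i ^+ m = if m == 1%N then c else 0)
  (Ebb : forall m, (m <= d)%N -> \sum_i b i * b i * p i ^+ (d - m) * q i ^+ m = 0)
  k G H : (k < d)%N -> sol a b p q k G H ->
  [/\ G 0%N = 0, H 0%N = 0 & (0 < k)%N -> G 1%N = 0 /\ H 1%N = 0].
Proof.
move=> hk hs.
have hz : forall x : 'I_r -> K, forall n, (k + n <= d)%N ->
   \sum_i x i * p i ^+ (d - k - n) * q i ^+ n *
     (a i * ev k G (p i) (q i) + b i * ev k H (p i) (q i)) = 0.
  by move=> x n _; rewrite big1 // => i _; rewrite hs mulr0.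
have sa : forall n, (k + n <= d)%N -> \sum_(t < k.+1) H t * (if (n + t == 1)%N then c else 0) = 0.
  move=> n hn; rewrite -[RHS](hz a n hn) key_id //; apply: eq_bigr => t _.
  have ht : (n + t <= d)%N by have := ltn_ord t; lia.
  by rewrite Eaa // Eab // mulr0 add0r.
have sb : forall n, (k + n <= d)%N -> \sum_(t < k.+1) G t * (if (n + t == 1)%N then c else 0) = 0.
  move=> n hn; rewrite -[RHS](hz b n hn) key_id //; apply: eq_bigr => t _.
  have ht : (n + t <= d)%N by have := ltn_ord t; lia.
  by rewrite Eba // Ebb // mulr0 addr0.
have c1 : forall F : nat -> K, \sum_(t < k.+1) F t * (if (1 + t == 1)%N then c else 0) = F 0%N * c.
  move=> F; rewrite big_ord_recl /= big1 ?addr0 // => t _.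
  by rewrite /bump /=; rewrite mulr0.
have c0 : (0 < k)%N -> forall F : nat -> K, \sum_(t < k.+1) F t * (if (0 + t == 1)%N then c else 0) = F 1%N * c.
  case: k {hk hs hz sa sb c1} => // k _ F.
  rewrite big_ord_recl big_ord_recl /= mulr0 add0r big1 ?addr0 // => t _.
  by rewrite /bump /=; rewrite mulr0.
have h1 : (k + 1 <= d)%N by lia.
split.
- by have := sb 1%N h1; rewrite c1 => /eqP; rewrite mulf_eq0 (negbTE hc) orbF => /eqP.
- by have := sa 1%N h1; rewrite c1 => /eqP; rewrite mulf_eq0 (negbTE hc) orbF => /eqP.
move=> k0; have h0 : (k + 0 <= d)%N by lia.
split.
- by have := sb 0%N h0; rewrite c0 // => /eqP; rewrite mulf_eq0 (negbTE hc) orbF => /eqP.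
- by have := sa 0%N h0; rewrite c0 // => /eqP; rewrite mulf_eq0 (negbTE hc) orbF => /eqP.
Qed.

Lemma ev_shift (K : comRingType) k (G : nat -> K) x y : G 0%N = 0 ->
  ev k.+1 G x y = y * ev k (fun t => G t.+1) x y.
Proof.
move=> G0; rewrite /ev big_ord_recl G0 !mul0r add0r mulr_sumr.
apply: eq_bigr => t _; rewrite /bump /= subSS exprS; ring.
Qed.

Lemma ev_y0 (K : comRingType) k (G : nat -> K) x : G 0%N = 0 -> ev k G x 0 = 0.
Proof.
move=> G0; rewrite /ev big_ord_recl G0 !mul0r add0r big1 // => t _.
by rewrite expr0n /= mulr0.
Qed.

Lemma sol_step (K : idomainType) r (a b p q : 'I_r -> K) k G H :
  sol a b p q k.+1 G H -> G 0%N = 0 -> H 0%N = 0 -> G 1%N = 0 -> H 1%N = 0 ->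
  sol a b p q k (fun t => G t.+1) (fun t => H t.+1).
Proof.
move=> hs G0 H0 G1 H1 i.
have := hs i; rewrite !ev_shift //.
have [->|qn0] := eqVneq (q i) 0.
  by rewrite !ev_y0 // !mulr0 addr0.
move=> /eqP; rewrite mulrCA [X in _ + X]mulrCA -mulrDr mulf_eq0 (negbTE qn0) /=.
by move/eqP.
Qed.

Lemma sol_zero (K : fieldType) r (a b p q : 'I_r -> K) d (c : K) (hc : c != 0)
  (Eaa : forall m, (m <= d)%N -> \sum_i a i * a i * p i ^+ (d - m) * q i ^+ m = 0)
  (Eab : forall m, (m <= d)%N -> \sum_i a i * b i * p i ^+ (d - m) * q i ^+ m = if m == 1%N then c else 0)
  (Eba : forall m, (m <= d)%N -> \sum_i b i * a i * p i ^+ (d - m) * q i ^+ m = if m == 1%N then c else 0)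
  (Ebb : forall m, (m <= d)%N -> \sum_i b i * b i * p i ^+ (d - m) * q i ^+ m = 0) :
  forall k, (k < d)%N -> forall G H, sol a b p q k G H ->
  forall t, (t <= k)%N -> G t = 0 /\ H t = 0.
Proof.
elim=> [|k IH] hk G H hs t ht.
  have [G0 H0 _] := vanish hc Eaa Eab Eba Ebb hk hs.
  by move: ht; rewrite leqn0 => /eqP ->.
have [G0 H0 /(_ isT) [G1 H1]] := vanish hc Eaa Eab Eba Ebb hk hs.
have hs' := sol_step hs G0 H0 G1 H1.
case: t ht => [|t] ht; first by [].
exact: (IH (ltnW hk) _ _ hs' t ht).
Qed.

Lemma sol_exists (K : fieldType) r (a b p q : 'I_r -> K) k :
  (r < k.+1 + k.+1)%N ->
  exists G H, sol a b p q k G H /\ exists t, (t <= k)%N /\ (G t != 0 \/ H t != 0).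
Proof.
move=> hr.
pose A : 'M[K]_(k.+1 + k.+1, r) := \matrix_(j, i)
  match split j with
  | inl t => a i * p i ^+ (k - t) * q i ^+ t
  | inr t => b i * p i ^+ (k - t) * q i ^+ t end.
have rk : (0 < \rank (kermx A))%N.
  by rewrite mxrank_ker subn_gt0; apply: leq_ltn_trans hr; exact: rank_leq_col.
have nz : kermx A != 0 by rewrite -mxrank_eq0 -lt0n.
have [j0 hj0] : exists j0, row j0 (kermx A) != 0.
  apply/existsP; move: nz; apply: contraLR => /existsPn h; rewrite negbK; apply/eqP/row_matrixP => j.
  by rewrite row0; apply/eqP; rewrite (negbNE (h j)).
set z := row j0 (kermx A) in hj0.
have hAl : forall t i, A (lshift k.+1 t) i = a i * p i ^+ (k - t) * q i ^+ t.
  by move=> t i; rewrite mxE (unsplitK (inl t)).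
have hAr : forall t i, A (rshift k.+1 t) i = b i * p i ^+ (k - t) * q i ^+ t.
  by move=> t i; rewrite mxE (unsplitK (inr t)).
have hz : forall j, z 0 j = kermx A j0 j by move=> j; rewrite mxE.
have zA : z *m A = 0 by rewrite /z -row_mul mulmx_ker row0.
exists (fun t => z 0 (lshift k.+1 (inord t))), (fun t => z 0 (rshift k.+1 (inord t))).
split.
  move=> i; have := congr1 (fun M : 'M[K]_(1, r) => M 0 i) zA; rewrite !mxE big_split_ord /=.
  move=> <-; rewrite /ev !mulr_sumr; congr (_ + _); apply: eq_bigr => t _;
  rewrite inord_val hz ?hAl ?hAr; ring.
have [j hj] : exists j, z 0 j != 0.
  apply/existsP; move: hj0; apply: contraLR => /existsPn h; rewrite negbK; apply/eqP/rowP => j.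
  by rewrite [RHS]mxE; apply/eqP; rewrite (negbNE (h j)).
move: hj; rewrite -(splitK j); case: (split j) => t /= ht.
  by exists t; split; [rewrite -ltnS | left; rewrite inord_val].
by exists t; split; [rewrite -ltnS | right; rewrite inord_val].
Qed.

Lemma lower_bound (K : fieldType) r (a b p q : 'I_r -> K) d (c : K) (hc : c != 0)
  (Eaa : forall m, (m <= d)%N -> \sum_i a i * a i * p i ^+ (d - m) * q i ^+ m = 0)
  (Eab : forall m, (m <= d)%N -> \sum_i a i * b i * p i ^+ (d - m) * q i ^+ m = if m == 1%N then c else 0)
  (Eba : forall m, (m <= d)%N -> \sum_i b i * a i * p i ^+ (d - m) * q i ^+ m = if m == 1%N then c else 0)
  (Ebb : forall m, (m <= d)%N -> \sum_i b i * b i * p i ^+ (d - m) * q i ^+ m = 0) :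
  (2 * d <= r)%N.
Proof.
rewrite leqNgt; apply/negP => hr.
have hk : (r./2 < d)%N by rewrite ltn_half_double -mul2n.
have hr2 : (r < (r./2).+1 + (r./2).+1)%N.
  have e := odd_double_half r; rewrite -addnn in e.
  have o : (odd r <= 1)%N by case: (odd r).
  move: e o; move: (odd r : nat) (r./2) => x y; lia.
have [G [H [hs [t [ht hne]]]]] := sol_exists a b p q hr2.
have [G0 H0] := sol_zero hc Eaa Eab Eba Ebb hk hs ht.
by case: hne; rewrite ?G0 ?H0 eqxx.
Qed.

Lemma geom_sum (K : idomainType) (y : K) d : y ^+ d = 1 ->
  \sum_(j < d) y ^+ j = if y == 1 then d%:R else 0.
Proof.
move=> yd; have [->|y1] := eqVneq y 1.
  by rewrite (eq_bigr (fun _ => 1)) ?sumr_const ?card_ord // => j _; rewrite expr1n.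
have := subrX1 y d; rewrite yd subrr => /esym/eqP; rewrite mulf_eq0 subr_eq0 (negbTE y1) /=.
by move/eqP.
Qed.

Lemma dvd_crit d m : (2 <= d)%N -> (m <= d)%N -> (d %| (d - 1 + m))%N = (m == 1%N).
Proof.
move=> hd hm; case: m hm => [|[|m]] hm /=.
- rewrite addn0; apply/negbTE; apply/negP => /dvdn_leq; lia.
- by rewrite addn1 subn1 prednK ?dvdnn //; lia.
- have -> : (d - 1 + m.+2 = d + m.+1)%N by lia.
  rewrite dvdn_addr ?dvdnn //; apply/negbTE; apply/negP => /dvdn_leq; lia.
Qed.

Lemma split_sum (K : nmodType) d (F : nat -> K) :
  \sum_(i < 2 * d) F i = \sum_(j < d) (F j + F (j + d)%N).
Proof.
rewrite -(big_mkord xpredT F) (big_cat_nat _ (n := d)) //=; last by lia.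
rewrite -{2}[d]add0n big_addn.
have -> : (2 * d - d = d)%N by lia.
by rewrite !big_mkord big_split.
Qed.

Lemma upper (K : numClosedFieldType) d (hd : (2 <= d)%N) (eta : K)
  (he : (2 * d).-primitive_root eta) :
  exists v w : 'I_(2 * d) -> 'I_2 -> K, forall m1 m, (m1 <= 2)%N -> (m <= d)%N ->
  \sum_i ((v i ord0 ^+ (2 - m1) * v i (@ord_max 1) ^+ m1) *
          (w i ord0 ^+ (d - m) * w i (@ord_max 1) ^+ m)) =
  (if m1 == 1%N then 2^-1 else 0) * (if m == 1%N then (d%:R)^-1 else 0).
Proof.
pose g : K := ((2 * d)%:R)^-1.
pose vv (i : nat) (e : 'I_2) : K := g * (eta ^+ (d - 1)) ^+ (i %% d) *
   (if (i < d)%N then 1 else if e == ord0 then 'i else - 'i).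
pose ww (i : nat) (e : 'I_2) : K := if e == ord0 then 1 else (eta ^+ 2) ^+ (i %% d).
exists (fun i => vv (val i)), (fun i => ww (val i)) => m1 m hm1 hm.
pose F (i : nat) := (vv i ord0 ^+ (2 - m1) * vv i (@ord_max 1) ^+ m1) *
          (ww i ord0 ^+ (d - m) * ww i (@ord_max 1) ^+ m).
rewrite (split_sum d F).
pose Y := (eta ^+ (d - 1)) ^+ 2 * (eta ^+ 2) ^+ m.
pose f : K := if m1 == 1%N then 2 else 0.
have hd0 : (0 < d)%N by lia.
have term : forall j : 'I_d, F j + F (j + d)%N = g ^+ 2 * f * Y ^+ j.
  move=> j; rewrite /F /vv /ww /= modn_small // modnDr modn_small //.
  rewrite ltn_ord (_ : (j + d < d)%N = false); last by lia.
  have eY : (eta ^+ (d - 1) ^+ 2 * eta ^+ 2 ^+ m) ^+ j = (eta ^+ (d - 1) ^+ j) ^+ 2 * (eta ^+ 2 ^+ j) ^+ m.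
    by rewrite exprMn -!exprM !mulnA (mulnAC (d - 1)%N) (mulnAC 2%N).
  rewrite /Y eY expr1n mul1r.
  set u := (eta ^+ (d - 1)) ^+ j; set z := ((eta ^+ 2) ^+ j) ^+ m.
  have hi : 'i * 'i = -1 :> K by rewrite -expr2 sqrCi.
  rewrite /f; clear F f; case: m1 hm1 => [|[|[|]]] //= _; rewrite ?expr0 ?expr1 ?expr2; ring: hi.
have eYe : Y = eta ^+ (2 * (d - 1 + m)).
  rewrite /Y -!exprM -exprD; congr (_ ^+ _); lia.
rewrite (eq_bigr _ (fun j _ => term j)) -mulr_sumr geom_sum; last first.
  rewrite eYe -exprM (_ : (2 * (d - 1 + m) * d = (2 * d) * (d - 1 + m))%N); last by rewrite mulnAC.
  by rewrite exprM (prim_expr_order he) expr1n.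
have -> : (Y == 1) = (m == 1%N).
  by rewrite eYe -(prim_order_dvd he) -(dvd_crit hd hm) dvdn_pmul2l.
have dn0 : (d%:R : K) != 0 by rewrite pnatr_eq0; lia.
rewrite /f /g; case: (m1 == 1%N); case: (m == 1%N); rewrite ?mulr0 ?mul0r //.
rewrite natrM; field; exact: dn0.
Qed.

Lemma prod_ones (K : comRingType) n (b : 'I_n -> 'I_2) (w : 'I_2 -> K) :
 \prod_(k < n) w (b k) = w ord0 ^+ (n - #|[pred k | val (b k) == 1%N]|) *
                          w (@ord_max 1) ^+ #|[pred k | val (b k) == 1%N]|.
Proof.
rewrite (bigID [pred k | val (b k) == 1%N]) /= mulrC.
have hc := cardC [pred k | val (b k) == 1%N]; rewrite card_ord in hc.
congr (_ * _).
- rewrite (eq_bigr (fun _ => w ord0)); last first.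
    move=> k hk; congr (w _); apply: val_inj => /=.
    by move: hk (ltn_ord (b k)); case: (val (b k)) => [|[|]].
  have e : #|[predC [pred k | val (b k) == 1%N]]| = (n - #|[pred k | val (b k) == 1%N]|)%N.
    apply/eqP; rewrite -(eqn_add2l #|[pred k | val (b k) == 1%N]|) hc subnKC //.
    by have := max_card [pred k | val (b k) == 1%N]; rewrite card_ord.
  rewrite prodr_const -e; congr (_ ^+ _); by apply: eq_card => k.
- rewrite (eq_bigr (fun _ => w (@ord_max 1))); last first.
    by move=> k /eqP hk; congr (w _); apply: val_inj.
  by rewrite prodr_const.
Qed.

Definition sel n m : 'I_n -> 'I_2 := fun k => if (k < m)%N then @ord_max 1 else ord0.

Lemma card_sel n m : (m <= n)%N -> #|[pred k : 'I_n | val (sel m k) == 1%N]| = m.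
Proof.
move=> hm.
have -> : #|[pred k : 'I_n | val (sel m k) == 1%N]| = #|[pred k : 'I_n | (k < m)%N]|.
  by apply: eq_card => k; rewrite /sel !inE; case: (k < m)%N.
have inj : injective (widen_ord hm) by move=> x y /(congr1 val) /= h; apply: val_inj.
rewrite -[RHS](card_ord m) -(card_imset _ inj).
apply: eq_card => k; rewrite inE; apply/idP/imsetP.
  by move=> h; exists (Ordinal h) => //; apply: val_inj.
by move=> [j _ ->] /=.
Qed.

Lemma entries (K : fieldType) d r (v w : 'I_r -> 'I_2 -> K)
  (hT : forall a b, @W2_tensor_Wd K d a b = \sum_(i < r) @psrank_one K d (v i) (w i) a b)
  kk m : (kk <= 2)%N -> (m <= d)%N ->
  \sum_i ((v i ord0 ^+ (2 - kk) * v i (@ord_max 1) ^+ kk) *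
          (w i ord0 ^+ (d - m) * w i (@ord_max 1) ^+ m)) =
  (if kk == 1%N then 2^-1 else 0) * (if m == 1%N then (d%:R)^-1 else 0).
Proof.
move=> hk hm; have := hT (sel kk) (sel m).
rewrite /W2_tensor_Wd /W_sym !card_sel // => ->.
by apply: eq_bigr => i _; rewrite /psrank_one !prod_ones !card_sel.
Qed.


Unset Implicit Arguments.

Theorem proposition4p4 (R : realType) (d : nat) (hd : (2 <= d)%N) :
  psrank_eq (@W2_tensor_Wd R[i] d) (2 * d)%N.
Proof.
have d0 : (0 < 2 * d)%N by lia.
split.
- have [eta he] := @prim_root_exists R[i] (2 * d) d0.
  have [v [w hvw]] := upper hd he.
  exists v, w => a b.
  set m1 := #|[pred k | val (a k) == 1%N]|.
  set m := #|[pred k | val (b k) == 1%N]|.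
  have hm1 : (m1 <= 2)%N by have := max_card [pred k | val (a k) == 1%N]; rewrite card_ord.
  have hm : (m <= d)%N by have := max_card [pred k | val (b k) == 1%N]; rewrite card_ord.
  have e : forall i, psrank_one (v i) (w i) a b =
     (v i ord0 ^+ (2 - m1) * v i (@ord_max 1) ^+ m1) * (w i ord0 ^+ (d - m) * w i (@ord_max 1) ^+ m).
    by move=> i; rewrite /psrank_one !prod_ones.
  by rewrite (eq_bigr _ (fun i _ => e i)) hvw.
- move=> r [v [w hT]].
  have dn0 : (d%:R : R[i]) != 0 by rewrite pnatr_eq0; lia.
  have cn0 : (2^-1 * (d%:R)^-1 : R[i]) != 0.
    by rewrite mulf_neq0 // invr_eq0 // pnatr_eq0.
  apply: (@lower_bound _ r (fun i => v i ord0) (fun i => v i (@ord_max 1))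
            (fun i => w i ord0) (fun i => w i (@ord_max 1)) d _ cn0).
  + move=> m hm; have E := @entries _ d r v w hT 0 m isT hm; rewrite /= !mul0r in E.
    rewrite -[RHS]E; by apply: eq_bigr => i _; rewrite expr0 expr2; ring.
  + move=> m hm; have E := @entries _ d r v w hT 1 m isT hm; rewrite /= in E.
    have -> : (if m == 1%N then 2^-1 * d%:R^-1 else 0) = 2^-1 * (if m == 1%N then d%:R^-1 else 0) :> R[i].
      by case: (m == 1%N); rewrite ?mulr0.
    rewrite -E; apply: eq_bigr => i _.
    by rewrite !expr1; ring.
  + move=> m hm; have E := @entries _ d r v w hT 1 m isT hm; rewrite /= in E.
    have -> : (if m == 1%N then 2^-1 * d%:R^-1 else 0) = 2^-1 * (if m == 1%N then d%:R^-1 else 0) :> R[i].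
      by case: (m == 1%N); rewrite ?mulr0.
    rewrite -E; apply: eq_bigr => i _.
    by rewrite !expr1; ring.
  + move=> m hm; have E := @entries _ d r v w hT 2 m isT hm; rewrite /= !mul0r in E.
    rewrite -[RHS]E.
    by apply: eq_bigr => i _; rewrite expr0 expr2; ring.
Qed.
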